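(* Let $\mathbf{O}\,\dot\cup\,\mathbf{S}$ be a finite set of categorical variables, $\mathcal{G}$ a DAG over $\mathbf{O}\cup\mathbf{S}$, $\hat{\mathbf{s}}$ a fixed value of $\mathbf{S}$, and $\mathcal{G}'$ the subgraph of $\mathcal{G}$ obtained by removing all edges out of nodes in $\mathbf{S}$. Then $\mathbf{BN}(\mathcal{G}')[^{\mathbf{S}=\hat{\mathbf{s}}}=\mathbf{BN}(\mathcal{G})[^{\mathbf{S}=\hat{\mathbf{s}}}$.
   Context: $\mathbf{BN}(\mathcal{G})$ is the set of distributions $P$ over the nodes of DAG $\mathcal{G}$ satisfying the Markov condition: each variable is independent of its non-descendants that are not parents, given its parents (equivalently, $p(\mathbf{x})=\prod_X p(x\mid \mathrm{pa}_{\mathcal{G}}(X))$). For a model $\mathbf{M}$ over $\mathbf{O}\cup\mathbf{S}$, $\mathbf{M}[^{\mathbf{S}=\hat{\mathbf{s}}}$ (selection) is the set of distributions $Q$ over $\mathbf{O}$ such that there is $P\in\mathbf{M}$ with $p(\hat{\mathbf{s}})>0$ and $q(\mathbf{o})=p(\mathbf{o}\mid\hat{\mathbf{s}})$ for all $\mathbf{o}$. *)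

(* Defs.v *)
From HB Require Import structures.
From mathcomp Require Import all_boot all_order all_algebra.
Set Implicit Arguments. Unset Strict Implicit. Unset Printing Implicit Defensive.
Import Order.TTheory GRing.Theory Num.Theory.
Local Open Scope ring_scope.

Definition assign (V : finType) (D : V -> finType) := {dffun forall v : V, D v}.

Definition is_dist (R : realFieldType) (V : finType) (D : V -> finType)
  (p : assign D -> R) : Prop :=
  (forall x, 0 <= p x) /\ \sum_(x : assign D) p x = 1.

(* A DAG over V: an edge relation e (u -> v iff e u v) without directed cycles. *)
Definition acyclic (V : finType) (e : rel V) : Prop :=
  forall x : V, ~~ [exists y, e x y && connect e y x].

Definition parents (V : finType) (e : rel V) (v : V) : {set V} := [set u | e u v].

Definition marg (R : realFieldType) (V : finType) (D : V -> finType)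
  (p : assign D -> R) (A : {set V}) (x : assign D) : R :=
  \sum_(y : assign D | [forall u in A, y u == x u]) p y.

(* Conditional probability p(x_v | x_pa(v)) = p(x_v, x_pa) / p(x_pa)
   (MathComp convention: division by 0 gives 0). *)
Definition cond (R : realFieldType) (V : finType) (D : V -> finType)
  (e : rel V) (p : assign D -> R) (v : V) (x : assign D) : R :=
  marg p (v |: parents e v) x / marg p (parents e v) x.

Definition BN (R : realFieldType) (V : finType) (D : V -> finType) (e : rel V)
  (p : assign D -> R) : Prop :=
  is_dist p /\ forall x : assign D, p x = \prod_(v : V) cond e p v x.

(* Variables O ∪ S encoded as the disjoint sum O + S. *)
Section Sel.
Variables (O S : finType) (D : (O + S)%type -> finType).

Definition assignO := {dffun forall o : O, D (inl o)}.
Definition assignS := {dffun forall s : S, D (inr s)}.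

Definition join (o : assignO) (s : assignS) : assign D :=
  [ffun v => match v as v0 return D v0 with inl a => o a | inr b => s b end].

Definition probS (R : realFieldType) (p : assign D -> R) (sh : assignS) : R :=
  \sum_(o : assignO) p (join o sh).

(* M[^{S = ŝ}] : selection of a model M (a set of distributions over O ∪ S). *)
Definition select (R : realFieldType) (M : (assign D -> R) -> Prop) (sh : assignS)
  (q : assignO -> R) : Prop :=
  exists p, M p /\ 0 < probS p sh /\ forall o : assignO, q o = p (join o sh) / probS p sh.
End Sel.

Definition cut_S (O S : finType) (e : rel (O + S)%type) : rel (O + S)%type :=
  fun u v => e u v && (if u is inl _ then true else false).

(* Main.v *)
Require Import Defs.
From HB Require Import structures.
From mathcomp Require Import all_boot all_order all_algebra.
Set Implicit Arguments. Unset Strict Implicit. Unset Printing Implicit Defensive.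
Import Order.TTheory GRing.Theory Num.Theory.
Local Open Scope ring_scope.

Section Agree.
Variables (R : realFieldType) (V : finType) (D : V -> finType).
Implicit Types (x y z : assign D) (A B E C : {set V}).

Definition agree A y x : bool := [forall u in A, y u == x u].
Definition mix A y x : assign D := [ffun w => if w \in A then y w else x w].

Lemma agreeP A y x : reflect (forall u, u \in A -> y u = x u) (agree A y x).
Proof.
apply: (iffP forall_inP) => H u Hu; first by apply/eqP; apply: H.
by rewrite H.
Qed.

Lemma agree_setT y x : agree setT y x = (y == x).
Proof.
apply/agreeP/eqP => [H|->//]; apply/ffunP => u; exact: H (in_setT u).
Qed.

Lemma agree_sub A B y x : A \subset B -> agree B y x -> agree A y x.
Proof. by move=> /subsetP sAB /agreeP H; apply/agreeP => u /sAB /H. Qed.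

Lemma agree_tr A t y x : agree A y x -> agree A t y = agree A t x.
Proof.
move/agreeP => H; apply/agreeP/agreeP => H' u Hu; first by rewrite H' // H.
by rewrite H' // H.
Qed.

Lemma margE (p : assign D -> R) A x : marg p A x = \sum_(y | agree A y x) p y.
Proof. by []. Qed.

Lemma regroup B E x (f : assign D -> R) : (forall u, u \in B -> u \notin E) ->
  \sum_(y | agree B y x) f y =
  \sum_(z | agree (B :|: E) z x) \sum_(y | agree (~: E) y z) f y.
Proof.
move=> dBE.
rewrite (partition_big (fun y => mix E x y) (fun z => agree (B :|: E) z x)).
  apply: eq_bigr => z /agreeP Hz; apply: eq_bigl => y.
  apply/andP/agreeP => [[_ /eqP <-] u|H]; first by rewrite inE ffunE => /negbTE ->.
  split.
    apply/agreeP => u Hu; rewrite H; last by rewrite inE dBE.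
    by rewrite Hz // inE Hu.
  apply/eqP/ffunP => u; rewrite ffunE; case: ifP => Hu.
    by rewrite Hz // inE Hu orbT.
  by rewrite H // inE Hu.
move=> y /agreeP Hy; apply/agreeP => u; rewrite inE ffunE.
case: ifP => [//|_]; rewrite orbF; exact: Hy.
Qed.

End Agree.

Section Prod.
Variables (R : realFieldType) (V : finType) (D : V -> finType).
Implicit Types (x y z : assign D) (A B E C : {set V}).
Variable g : rel V.
Hypothesis Hg : acyclic g.
Variable k : V -> assign D -> R.
Hypothesis k_ge0 : forall v x, 0 <= k v x.
Hypothesis k_loc : forall v y x, agree (v |: parents g v) y x -> k v y = k v x.
Hypothesis k_norm : forall v x, \sum_(y | agree (~: [set v]) y x) k v y = 1.

Lemma noloop v : ~~ g v v.
Proof. by apply/negP => Hv; move: (Hg v) => /existsPn /(_ v); rewrite Hv connect0. Qed.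

Lemma nocyc u w : g u w -> connect g w u -> False.
Proof. by move=> H1 H2; move: (Hg u) => /existsPn /(_ w); rewrite H1 H2. Qed.

Lemma sink_in C : C != set0 -> exists2 u, u \in C & forall w, w \in C -> ~~ g u w.
Proof.
case/set0Pn => u0 Hu0.
case: (arg_minnP (fun u => #|[set w | connect g u w]|) Hu0) => u Hu Hmin.
exists u => // w Hw; apply/negP => Guw.
have := Hmin w Hw; rewrite leqNgt => /negP; apply.
apply: proper_card; apply/properP; split.
  by apply/subsetP => t; rewrite !inE => Hwt; exact: connect_trans (connect1 Guw) Hwt.
by exists u; rewrite !inE ?connect0 //; apply/negP => Hwu; exact: nocyc Guw Hwu.
Qed.

Lemma claim C x : \sum_(y | agree (~: C) y x) \prod_(w in C) k w y = 1.
Proof.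
move: {2}#|C| (leqnn #|C|) => n; elim: n C x => [|n IH] C x HC.
  have -> : C = set0 by apply/eqP; rewrite -cards_eq0 -leqn0.
  rewrite setC0; under eq_bigr do rewrite big_set0.
  by rewrite (eq_bigl (pred1 x)) ?big_pred1_eq // => y; rewrite /= agree_setT.
have [->|CN0] := eqVneq C set0.
  rewrite setC0; under eq_bigr do rewrite big_set0.
  by rewrite (eq_bigl (pred1 x)) ?big_pred1_eq // => y; rewrite /= agree_setT.
have [u Hu Hs] := sink_in CN0.
have HC' : (#|C :\ u| <= n)%N.
  by move: HC; rewrite (cardsD1 u C) Hu.
rewrite (@regroup _ _ _ _ [set u]); last by move=> t; rewrite !inE; apply: contra => /eqP ->.
have -> : ~: C :|: [set u] = ~: (C :\ u).
  by apply/setP => t; rewrite !inE negb_and negbK orbC.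
rewrite -[RHS](IH (C :\ u) x HC').
apply: eq_bigr => z Hz.
transitivity (\sum_(y | agree (~: [set u]) y z) k u y * \prod_(w in C :\ u) k w z).
  apply: eq_bigr => y Hy; rewrite (bigD1 u Hu); congr (_ * _).
  apply: eq_big => [w|w]; first by rewrite in_setD1 andbC.
  move=> /andP[Hw Hwu]; apply: k_loc; apply: agree_sub Hy.
  apply/subsetP => t; rewrite !inE; case/orP => [/eqP ->|Htw]; first by [].
  by apply: contraNneq (Hs w Hw) => <-.
by rewrite -big_distrl /= k_norm mul1r.
Qed.

Definition pk x := \prod_v k v x.

Lemma margA A B x : (forall w t, w \in A -> g t w -> t \in A) -> B \subset A ->
  marg pk B x = \sum_(z | agree (B :|: ~: A) z x) \prod_(w in A) k w z.
Proof.
move=> HA HBA; rewrite margE (@regroup _ _ _ _ (~: A)); last first.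
  by move=> u Hu; rewrite inE negbK (subsetP HBA).
apply: eq_bigr => z _; rewrite setCK.
transitivity (\sum_(y | agree A y z) (\prod_(w in A) k w z) * \prod_(w in ~: A) k w y).
  apply: eq_bigr => y Hy; rewrite /pk (bigID (mem A)) /=; congr (_ * _).
    apply: eq_bigr => w Hw; apply: k_loc; apply: agree_sub Hy.
    by apply/subsetP => t; rewrite !inE; case/orP => [/eqP ->|]; [|apply: HA].
  by apply: eq_bigl => w; rewrite inE.
by rewrite -big_distrr /= -{2}(setCK A) claim mulr1.
Qed.

Lemma key v x : marg pk (v |: parents g v) x = k v x * marg pk (parents g v) x.
Proof.
pose A := [set u | connect g u v].
have HA : forall w t, w \in A -> g t w -> t \in A.
  by move=> w t; rewrite !inE => Hw Htw; exact: connect_trans (connect1 Htw) Hw.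
have HvA : v \in A by rewrite inE connect0.
have HpA : parents g v \subset A.
  by apply/subsetP => t; rewrite !inE => H; exact: connect1.
have HvpA : v |: parents g v \subset A by rewrite subUset sub1set HvA.
rewrite !(margA _ HA) //.
transitivity (k v x * \sum_(z | agree ((v |: parents g v) :|: ~: A) z x)
     \prod_(w in A | w != v) k w z).
  rewrite big_distrr /=; apply: eq_bigr => z Hz; rewrite (bigD1 v HvA) /=.
  congr (_ * _); apply: k_loc; apply: agree_sub Hz; exact: subsetUl.
congr (_ * _).
rewrite [RHS](@regroup _ _ _ _ [set v]); last first.
  move=> t; rewrite !inE; case/orP => [Ht|Ht]; apply/negP => /eqP Htv.
    by move: Ht; rewrite Htv; apply/negP; exact: noloop.
  by move: Ht; rewrite Htv connect0.
have -> : (parents g v :|: ~: A) :|: [set v] = (v |: parents g v) :|: ~: A.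
  by apply/setP => t; rewrite !inE; case: (t == v); case: (g t v); case: connect.
apply: eq_bigr => z Hz.
transitivity (\sum_(y | agree (~: [set v]) y z) k v y * \prod_(w in A | w != v) k w z).
  by rewrite -big_distrl /= k_norm mul1r.
apply: eq_bigr => y Hy; rewrite [RHS](bigD1 v HvA) /=; congr (_ * _).
apply: eq_bigr => w /andP[Hw Hwv]; symmetry; apply: k_loc; apply: agree_sub Hy.
apply/subsetP => t; rewrite !inE; case/orP => [/eqP ->//|Htw].
apply/negP => /eqP Htv; rewrite Htv in Htw.
by move: Hw; rewrite inE => Hw; exact: nocyc Htw Hw.
Qed.

Lemma pk_ge0 x : 0 <= pk x.
Proof. by apply: prodr_ge0 => v _. Qed.

Lemma marg_ge (p : assign D -> R) B x : (forall y, 0 <= p y) -> p x <= marg p B x.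
Proof.
move=> H; rewrite margE (bigD1 x) /=; last by apply/agreeP.
by rewrite lerDl sumr_ge0.
Qed.

Lemma BN_prod (x0 : assign D) : BN g pk.
Proof.
split; first split; first exact: pk_ge0.
  have := claim setT x0; rewrite setCT => <-.
  apply: eq_big => [y|y _]; first by apply/esym/agreeP => u; rewrite inE.
  by apply: eq_bigl => w; rewrite inE.
move=> x; case: (boolP [forall v, marg pk (parents g v) x != 0]).
  move/forallP => H; apply: eq_bigr => v _; by rewrite /cond key mulfK.
move/forallPn => [v /negPn/eqP Hv].
rewrite [RHS](bigD1 v) //= /cond Hv invr0 mulr0 mul0r.
apply/eqP; rewrite eq_le pk_ge0 andbT -Hv; apply: marg_ge; exact: pk_ge0.
Qed.

End Prod.

Section Kern.
Variables (R : realFieldType) (V : finType) (D : V -> finType).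
Implicit Types (x y z : assign D) (A B E C : {set V}).
Variable g : rel V.
Variable p : assign D -> R.
Variable x0 : assign D.
Hypothesis p_ge0 : forall x, 0 <= p x.
Hypothesis Hnl : forall v, ~~ g v v.

Definition K v x := if marg p (parents g v) x == 0 then (x v == x0 v)%:R else cond g p v x.

Lemma marg_agree B B' y x : B \subset B' -> agree B' y x -> marg p B y = marg p B x.
Proof.
move=> sBB' Hyx; rewrite !margE; apply: eq_bigl => t; apply: agree_tr.
exact: agree_sub Hyx.
Qed.

Lemma marg_ge0 B x : 0 <= marg p B x.
Proof. by rewrite margE sumr_ge0. Qed.

Lemma K_ge0 v x : 0 <= K v x.
Proof. by rewrite /K; case: ifP => _; rewrite ?ler0n // /cond divr_ge0 ?marg_ge0. Qed.

Lemma K_loc v y x : agree (v |: parents g v) y x -> K v y = K v x.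
Proof.
move=> H; rewrite /K /cond !(marg_agree _ H) ?subsetUr //.
by move/agreeP: H => /(_ v (setU11 _ _)) ->.
Qed.

Lemma pa_notv v : parents g v \subset ~: [set v].
Proof.
by apply/subsetP => t; rewrite !inE; apply: contraTN => /eqP ->; exact: Hnl.
Qed.

Lemma marg_sum v x :
  \sum_(y | agree (~: [set v]) y x) marg p (v |: parents g v) y = marg p (parents g v) x.
Proof.
rewrite [RHS]margE [RHS](@regroup _ _ _ _ (~: (v |: parents g v))); last first.
  by move=> t; rewrite !inE negbK => ->; rewrite orbT.
have -> : parents g v :|: ~: (v |: parents g v) = ~: [set v].
  apply/setP => t; rewrite !inE; case: (eqVneq t v) => [->|_]; last by case: (g t v).
  by rewrite (negbTE (Hnl v)).
by apply: eq_bigr => z _; rewrite setCK.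
Qed.

Lemma K_norm v x : \sum_(y | agree (~: [set v]) y x) K v y = 1.
Proof.
transitivity (\sum_(y | agree (~: [set v]) y x)
  (if marg p (parents g v) x == 0 then (y v == x0 v)%:R else cond g p v y)).
  apply: eq_bigr => y Hy; rewrite /K (marg_agree (pa_notv v) Hy) //.
case: eqP => Hm.
  rewrite (bigD1 (mix [set v] x0 x)) /=; last first.
    by apply/agreeP => u; rewrite !inE ffunE inE => /negbTE ->.
  rewrite ffunE inE eqxx eqxx big1 ?addr0 // => y /andP[Hy Hne].
  case: eqP => // Hyv; move/eqP: Hne; case; apply/ffunP => w; rewrite ffunE inE.
  case: eqP => [->//|Hw]; apply: (agreeP _ _ _ Hy); rewrite !inE; exact/eqP.
transitivity (\sum_(y | agree (~: [set v]) y x)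
   marg p (v |: parents g v) y / marg p (parents g v) x).
  by apply: eq_bigr => y Hy; rewrite /cond (marg_agree (pa_notv v) Hy).
rewrite -mulr_suml marg_sum divff //; exact/eqP.
Qed.

End Kern.

Lemma p_prodK (R : realFieldType) (V : finType) (D : V -> finType) (g : rel V)
  (p : assign D -> R) (x0 : assign D) : acyclic g -> BN g p ->
  forall x, p x = pk (K g p x0) x.
Proof.
move=> Hg [[p_ge0 p_sum] Hf].
have Hnl := noloop Hg.
have [[q_ge0 q_sum] _] : BN g (pk (K g p x0)).
  apply: (@BN_prod _ _ _ g Hg (K g p x0)) => //.
  - by move=> v x; apply: K_ge0.
  - by move=> v y x; apply: K_loc.
  - by move=> v x; apply: K_norm.
have Hpos : forall x, p x != 0 -> pk (K g p x0) x = p x.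
  move=> x Hx; rewrite Hf; apply: eq_bigr => v _; rewrite /K.
  case: eqP => // Hm; move: Hx; apply: contraNeq => _.
  by apply/eqP; apply/le_anti; rewrite p_ge0 andbT -Hm marg_ge.
have Hd : forall x, 0 <= pk (K g p x0) x - p x.
  move=> x; case: (eqVneq (p x) 0) => [->|Hx]; first by rewrite subr0 q_ge0.
  by rewrite Hpos // subrr.
have Hs : \sum_x (pk (K g p x0) x - p x) = 0 by rewrite sumrB q_sum p_sum subrr.
have H := psumr_eq0P (fun x _ => Hd x) Hs.
by move=> x; apply/esym/eqP; rewrite -subr_eq0 H.
Qed.

Lemma sum_mix (R : realFieldType) (V : finType) (D : V -> finType) v (x z : assign D)
  (f : assign D -> R) :
  \sum_(y | agree (~: [set v]) y x) f (mix [set v] y z) =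
  \sum_(y | agree (~: [set v]) y z) f y.
Proof.
rewrite [RHS](reindex_onto (fun y => mix [set v] y z) (fun y => mix [set v] y x)).
  apply: eq_bigl => y; have -> : agree (~: [set v]) (mix [set v] y z) z.
    by apply/agreeP => u; rewrite inE ffunE => /negbTE ->.
  rewrite andTb; apply/agreeP/eqP => [H|<- u]; last by rewrite inE !ffunE => /negbTE ->.
  apply/ffunP => w; rewrite !ffunE; case: ifP => Hw; first by rewrite Hw.
  by rewrite H // inE Hw.
move=> i /agreeP Hi; apply/ffunP => w; rewrite !ffunE; case: ifP => Hw; first by rewrite Hw.
by rewrite Hi // inE Hw.
Qed.

Section Main.
Variables (R : realFieldType) (O S : finType) (D : (O + S)%type -> finType).
Variable e : rel (O + S)%type.
Hypothesis He : acyclic e.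
Variable sh : assignS D.

Definition Jx (x : assign D) : assign D := join [ffun a => x (inl a)] sh.
Definition subst v (x : assign D) : assign D := mix [set v] x (Jx x).

Lemma acyc_cut : acyclic (cut_S e).
Proof.
move=> x; apply/negP => /existsP [y /andP [Hc Hcon]].
move: (He x) => /existsPn /(_ y); rewrite (andP Hc).1 /=.
have -> // : connect e y x.
by apply: (connect_sub _ Hcon) => u w /andP[H _]; exact: connect1.
Qed.

Lemma pa_cut v : parents (cut_S e) v \subset parents e v.
Proof. by apply/subsetP => t; rewrite !inE => /andP[]. Qed.

Lemma subst_agree v (y x : assign D) : agree (~: [set v]) y x ->
  subst v y = mix [set v] y (Jx x).
Proof.
move/agreeP => H; apply/ffunP => w; rewrite !ffunE; case: ifP => // Hw.
rewrite /Jx /join ?ffunE; case: w Hw H => [a|b] Hw H //=.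
by rewrite !ffunE H // inE Hw.
Qed.

Lemma subst_join v (o : assignO D) : subst v (join o sh) = join o sh.
Proof.
apply/ffunP => w; rewrite ffunE; case: ifP => // _.
by rewrite /Jx /join ?ffunE; case: w => [a|b] //=; rewrite !ffunE.
Qed.

Lemma subst_loc v (y x : assign D) : agree (v |: parents (cut_S e) v) y x ->
  agree (v |: parents e v) (subst v y) (subst v x).
Proof.
move/agreeP => H; apply/agreeP => t Ht; rewrite !ffunE; case: ifP => Htv.
  by apply: H; rewrite in_setU Htv.
rewrite /Jx /join ?ffunE; case: t Ht Htv H => [a|b] Ht Htv H //=; rewrite ?ffunE.
by apply: H; move: Ht; rewrite !inE /cut_S andbT.
Qed.

Lemma ex_assign (p : assign D -> R) : is_dist p -> exists x0 : assign D, true.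
Proof.
move=> [_ Hs]; case: (pickP (fun _ : assign D => true)) => [x0 _|H]; first by exists x0.
by move: Hs; rewrite big_pred0 // => /eqP; rewrite eq_sym oner_eq0.
Qed.

Lemma dir1 (q : assignO D -> R) : select (BN (cut_S e)) sh q -> select (BN e) sh q.
Proof.
move=> [p [HBN [Hpos Hq]]].
have [x0 _] := ex_assign HBN.1.
have Heq := p_prodK x0 acyc_cut HBN.
have Hp0 := HBN.1.1.
exists (pk (K (cut_S e) p x0)); split.
  apply: (@BN_prod _ _ _ e He (K (cut_S e) p x0)) => //.
  - by move=> v x; apply: K_ge0.
  - move=> v y x Hyx; apply: K_loc; apply: agree_sub Hyx.
    by apply: setUS; exact: pa_cut.
  - by move=> v x; apply: K_norm => //; exact: noloop acyc_cut.
have Hps : probS (pk (K (cut_S e) p x0)) sh = probS p sh.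
  by apply: eq_bigr => o _; rewrite -Heq.
by rewrite Hps; split => // o; rewrite Hq -Heq.
Qed.

Lemma dir2 (q : assignO D -> R) : select (BN e) sh q -> select (BN (cut_S e)) sh q.
Proof.
move=> [p [HBN [Hpos Hq]]].
have [x0 _] := ex_assign HBN.1.
have Heq := p_prodK x0 He HBN.
have Hp0 := HBN.1.1.
pose k' v x := K e p x0 v (subst v x).
have Hj : forall o, pk k' (join o sh) = p (join o sh).
  by move=> o; rewrite Heq; apply: eq_bigr => v _; rewrite /k' subst_join.
exists (pk k'); split.
  apply: (@BN_prod _ _ _ (cut_S e) acyc_cut k') => //.
  - by move=> v x; apply: K_ge0.
  - by move=> v y x Hyx; apply: K_loc; apply: subst_loc.
  - move=> v x; rewrite /k'.
    transitivity (\sum_(y | agree (~: [set v]) y x) K e p x0 v (mix [set v] y (Jx x))).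
      by apply: eq_bigr => y Hy; rewrite (subst_agree Hy).
    rewrite sum_mix; apply: K_norm => //; exact: noloop He.
have Hps : probS (pk k') sh = probS p sh.
  by apply: eq_bigr => o _; rewrite Hj.
by rewrite Hps; split => // o; rewrite Hq Hj.
Qed.

End Main.

Theorem lemma3 (R : realFieldType) (O S : finType) (D : (O + S)%type -> finType)
  (e : rel (O + S)%type) (He : acyclic e) (sh : assignS D) (q : assignO D -> R) :
  select (BN (cut_S e)) sh q <-> select (BN e) sh q.
Proof. split; [exact: dir1 | exact: dir2]. Qed.
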